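(* Let $n\ge 3$ and consider the cycle $C_n$ with an arbitrary initial coloring. In the Majority Model (MM): if $n$ is odd, the process always reaches a stable coloring; if $n$ is even, the process reaches a stable coloring or the blinking configuration. In the Random Majority Model (RMM): if $n$ is odd, the process (almost surely) reaches the all-white or the all-blue coloring; if $n$ is even, the process reaches the all-white coloring, the all-blue coloring, or the blinking configuration.
   Context: A coloring is a map from the nodes to $\{b,w\}$. In MM, all nodes update simultaneously: a node adopts the color strictly more frequent among its neighbors in the previous round and keeps its color in case of a tie. RMM is the same except that in case of a tie the node chooses blue or white independently and uniformly at random. A coloring is stable if one application of the update rule deterministically returns the same coloring. For even $n$, the two alternating colorings are those in which every two adjacent nodes of $C_n$ have different colors; the process is in the blinking configuration when it is in one of them (it then switches between the two forever). *)

(* Defs.v *)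
From mathcomp Require Import all_boot all_order all_algebra.
Set Implicit Arguments. Unset Strict Implicit. Unset Printing Implicit Defensive.
Import Order.TTheory GRing.Theory Num.Theory.
Local Open Scope ring_scope.

(* Colors: true = blue (b), false = white (w). *)
Definition coloring (n : nat) := {ffun 'I_n -> bool}.

Definition adj (n : nat) (u v : 'I_n) : bool := (v == ordS u) || (u == ordS v).

Definition nblue n (c : coloring n) (v : 'I_n) : nat :=
  #|[set u | adj v u & c u]|.
Definition nwhite n (c : coloring n) (v : 'I_n) : nat :=
  #|[set u | adj v u & ~~ c u]|.

Definition mm_step n (c : coloring n) : coloring n :=
  [ffun v => if (nwhite c v < nblue c v)%N then true
             else if (nblue c v < nwhite c v)%N then false
             else c v].

Definition mm_stable n (c : coloring n) : bool := mm_step c == c.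

Definition alternating n (c : coloring n) : bool :=
  [forall u, forall v, adj u v ==> (c u != c v)].

Definition all_white n (c : coloring n) : bool := c == [ffun => false].
Definition all_blue n (c : coloring n) : bool := c == [ffun => true].

Definition rmm_node_prob n (c : coloring n) (v : 'I_n) (x : bool) : rat :=
  if (nwhite c v < nblue c v)%N then (x == true)%:R
  else if (nblue c v < nwhite c v)%N then (x == false)%:R
  else 1 / 2.

Definition rmm_trans n (c c' : coloring n) : rat :=
  \prod_(v : 'I_n) rmm_node_prob c v (c' v).

(* Probability that the RMM chain started at c visits S within t steps. *)
Fixpoint rmm_hit n (S : {set coloring n}) (t : nat) (c : coloring n) : rat :=
  match t with
  | 0 => (c \in S)%:R
  | t'.+1 => if c \in S then 1
             else \sum_(c' : coloring n) rmm_trans c c' * rmm_hit S t' c'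
  end.

Definition rmm_as_reaches n (S : {set coloring n}) (c : coloring n) : Prop :=
  forall eps : rat, 0 < eps ->
    exists T : nat, forall t : nat, (T <= t)%N -> 1 - eps < rmm_hit S t c.

(* Main.v *)
Require Import Defs.
From mathcomp Require Import all_boot all_order all_algebra.
From mathcomp Require Import ring lra.
Set Implicit Arguments. Unset Strict Implicit. Unset Printing Implicit Defensive.
Import Order.TTheory GRing.Theory Num.Theory.
Local Open Scope ring_scope.

Section Cyc.
Variable m : nat.
Local Notation N := m.+3.
Local Notation T := 'I_N.
Implicit Types (c : coloring N) (u v : T).

Lemma ordSE v : ordS v = v + 1.
Proof. by rewrite -(add_Zp_1 (v : 'Z_N)). Qed.
Lemma ord_predE v : ord_pred v = v - 1.
Proof. by rewrite -(sub_Zp_1 (v : 'Z_N)). Qed.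

Lemma adjE u v : adj u v = (v == u + 1) || (v == u - 1).
Proof.
rewrite /adj !ordSE; congr (_ || _).
by apply/eqP/eqP => [->|->]; [rewrite addrK | rewrite subrK].
Qed.

Lemma NR0 : (N%:R : T) = 0.
Proof. by apply/val_inj; rewrite Zp_nat /= modnn. Qed.

Lemma neq_pm v : v + 1 != v - 1.
Proof.
apply/eqP => h.
have : (v + 1) - (v - 1) = 0 by rewrite h subrr.
have -> : (v + 1) - (v - 1) = 2%:R by ring.
move/(congr1 val); rewrite Zp_nat /= modn_small //.
Qed.

Lemma card_two (a b : T) (ca cb : bool) : a != b ->
  #|[set u | ((u == a) && ca) || ((u == b) && cb)]| = (ca + cb)%N.
Proof.
move=> ab; case: ca; case: cb => /=.
- rewrite (_ : [set u | _] = [set a; b]) ?cards2 ?ab //.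
  by apply/setP => u; rewrite !inE !andbT.
- rewrite (_ : [set u | _] = [set a]) ?cards1 //.
  by apply/setP => u; rewrite !inE andbT andbF orbF.
- rewrite (_ : [set u | _] = [set b]) ?cards1 //.
  by apply/setP => u; rewrite !inE andbT andbF.
- rewrite (_ : [set u | _] = set0) ?cards0 //.
  by apply/setP => u; rewrite !inE !andbF.
Qed.

Lemma nbgen c (P : bool -> bool) v :
  #|[set u | adj v u & P (c u)]| = addn (P (c (v+1))) (P (c (v-1))).
Proof.
rewrite -(@card_two (v+1) (v-1)) ?neq_pm //; apply: eq_card => u; rewrite !inE adjE.
by case: eqP => [->|_]; case: eqP => [->|_] //=; rewrite ?andbF ?orbF ?orbb.
Qed.

Lemma nblueE c v : nblue c v = addn (c (v+1)) (c (v-1)).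
Proof. exact: (nbgen c id v). Qed.
Lemma nwhiteE c v : nwhite c v = addn (~~ c (v+1)) (~~ c (v-1)).
Proof. exact: (nbgen c negb v). Qed.

Definition good c v := (c (v+1) == c v) || (c (v-1) == c v).

Lemma mmE c v : mm_step c v = if good c v then c v else ~~ c v.
Proof.
rewrite ffunE nblueE nwhiteE /good.
by case: (c (v+1)); case: (c (v-1)); case: (c v).
Qed.

Definition bstep c : coloring N := [ffun v => c (v+1) || c (v-1)].

Lemma walk (P : T -> bool) w : (forall v, P v -> P (v+1)) -> P w -> forall u, P u.
Proof.
move=> h pw u.
have -> : u = w + (nat_of_ord (u - w))%:R by rewrite natr_Zp addrC subrK.
elim: (nat_of_ord (u - w)) => [|k IH]; first by rewrite addr0.
by rewrite -[k.+1]addn1 natrD addrA; apply: h.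
Qed.

Lemma const_step (g : T -> bool) : (forall v, g (v+1) = g v) -> forall v, g v = g 0.
Proof.
move=> h v; apply/eqP; move: v.
by apply: (@walk (fun v => g v == g 0) 0) => // v /eqP <-; rewrite h.
Qed.

Lemma odd_step (g : T -> bool) : odd N -> (forall v, g (v + 2%:R) = g v) ->
  forall v, g (v+1) = g v.
Proof.
move=> hodd h.
have H : forall k v, g (v + (2 * k)%N%:R) = g v.
  elim=> [|k IH] v; first by rewrite muln0 addr0.
  by rewrite mulnS natrD addrA addrAC h IH.
move=> v; rewrite -[in RHS](H (N.+1)./2 v).
congr (g (v + _)).
have e : (2 * (N.+1)./2)%N = N.+1.
  by rewrite mul2n -[RHS]odd_double_half /=; move: hodd => /= ->.
by rewrite e -[N.+1]addn1 natrD NR0 add0r.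
Qed.

Lemma iter_b k c v : iter k bstep c v = [exists j : 'I_k.+1, c (v + k%:R - (2 * j)%N%:R)].
Proof.
elim: k c v => [|k IH] c v /=.
  apply/idP/existsP => [h|[j]]; first by exists ord0; rewrite subr0 addr0.
  by rewrite ord1 subr0 addr0.
rewrite ffunE !IH; apply/orP/existsP => [[/existsP[j hj]|/existsP[j hj]]|[j hj]].
- exists (widen_ord (leqnSn _) j) => /=; move: hj; congr (c _).
  by rewrite -natr1; ring.
- exists (lift ord0 j) => /=; move: hj; congr (c _).
  rewrite /bump /= add1n mulnS natrD -natr1 natrD; ring.
- have [jk|jk] := ltnP j k.+1.
  + left; apply/existsP; exists (Ordinal jk) => /=; move: hj; congr (c _).
    by rewrite -natr1; ring.
  + right; apply/existsP; exists ord_max => /=; move: hj; congr (c _).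
    have -> : nat_of_ord j = k.+1 by apply/eqP; rewrite eqn_leq jk -ltnS ltn_ord.
    rewrite mulnS -natr1 !natrD; ring.
Qed.

Lemma iter_bN c v : iter N bstep c v = [exists x : T, c (v - 2%:R * x)].
Proof.
rewrite iter_b NR0 addr0; apply/existsP/existsP => [[j hj]|[x hx]].
  by exists (j%:R); move: hj; rewrite natrM.
have xl : (x < N.+1)%N by rewrite ltnS ltnW.
by exists (Ordinal xl) => /=; rewrite natrM natr_Zp.
Qed.

Lemma iter_b2 c v : iter N bstep c (v + 2%:R) = iter N bstep c v.
Proof.
rewrite !iter_bN; apply/existsP/existsP => [[x hx]|[x hx]].
  by exists (x - 1); move: hx; congr (c _); ring.
by exists (x + 1); move: hx; congr (c _); ring.
Qed.


Lemma mm_stableP c : (forall v, good c v) -> mm_stable c.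
Proof. by move=> h; apply/eqP/ffunP => v; rewrite mmE h. Qed.

Lemma alt_of c : (forall v, c (v+1) != c v) -> alternating c.
Proof.
move=> h; apply/forallP => u; apply/forallP => v; apply/implyP; rewrite adjE.
case/orP => /eqP ->; first by rewrite eq_sym h.
by have := h (u - 1); rewrite subrK.
Qed.

Lemma good_mm c v : good c v -> good (mm_step c) v.
Proof.
move=> g; have := g; rewrite /good => /orP[e|e].
- have g1 : good c (v+1) by rewrite /good addrK [c v == _]eq_sym e orbT.
  by rewrite /good !mmE g g1 e.
- have g1 : good c (v-1) by rewrite /good subrK [c v == _]eq_sym e.
  by rewrite /good !mmE g g1 e orbT.
Qed.

Lemma bad_good c v : ~~ good c v -> good c (v+1) -> good (mm_step c) v.
Proof.
move=> b g1; rewrite /good !mmE (negbTE b) g1.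
by move: b; rewrite /good; case: (c (v+1)); case: (c v).
Qed.

Lemma mm_main k c : (#|[set v | ~~ good c v]| <= k)%N ->
  exists t, (forall v, good (iter t (@mm_step N) c) v) \/
            (forall v, ~~ good (iter t (@mm_step N) c) v).
Proof.
elim: k c => [|k IH] c hk.
  exists 0%N; left => v /=; apply/negPn/negP => bv.
  by move: hk; rewrite leqn0 cards_eq0 => /eqP/setP/(_ v); rewrite !inE bv.
case: (boolP [forall v, good c v]) => [/forallP h|]; first by exists 0%N; left.
rewrite negb_forall => /existsP[w bw].
case: (boolP [forall v, ~~ good c v]) => [/forallP h|]; first by exists 0%N; right.
rewrite negb_forall => /existsP[u /negPn gu].
have [v /andP[bv gv1]] : exists v, ~~ good c v && good c (v+1).
  case: (boolP [exists v, ~~ good c v && good c (v+1)]) => [/existsP //|/existsPn h].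
  have := @walk (fun v => ~~ good c v) w.
  have H : forall v, ~~ good c v -> ~~ good c (v+1).
    by move=> x bx; move: (h x); rewrite bx.
  by move/(_ H bw u); rewrite gu.
have lt : (#|[set v | ~~ good (mm_step c) v]| < #|[set v | ~~ good c v]|)%N.
  apply: proper_card; apply/properP; split.
    by apply/subsetP => x; rewrite !inE; apply: contra; exact: good_mm.
  by exists v; rewrite !inE ?bv // negbK bad_good.
have [t ht] := IH (mm_step c) (leq_trans lt hk).
by exists t.+1; rewrite iterSr.
Qed.

Lemma h1_of c : (forall v, ~~ good c v) -> forall v, c (v+1) != c v.
Proof. by move=> hb v; move: (hb v); rewrite /good negb_or => /andP[]. Qed.

Lemma allbad_odd c : odd N -> (forall v, ~~ good c v) -> False.
Proof.
move=> ho hb; have h1 := h1_of hb.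
have h2 : forall v, c (v + 2%:R) = c v.
  move=> v; have a := h1 (v+1); have b := h1 v.
  have -> : v + 2%:R = v + 1 + 1 by ring.
  by move: a b; case: (c (v+1+1)); case: (c (v+1)); case: (c v).
by have := h1 0; rewrite (odd_step ho h2) eqxx.
Qed.

Lemma constant_S (f : coloring N) : (forall v, f v = f 0) -> all_white f || all_blue f.
Proof.
move=> hc; case h0: (f 0); apply/orP; [right|left]; apply/eqP/ffunP => v;
  by rewrite ffunE hc h0.
Qed.

Lemma bN_odd c : odd N -> all_white (iter N bstep c) || all_blue (iter N bstep c).
Proof.
move=> ho; apply: constant_S; apply: const_step; apply: odd_step ho _.
exact: iter_b2.
Qed.

Lemma bN_even c : [|| all_white (iter N bstep c), all_blue (iter N bstep c)
                    | alternating (iter N bstep c)].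
Proof.
set f := iter N bstep c.
have hg : forall v, (f (v+1+1) == f (v+1)) = (f (v+1) == f v).
  move=> v; have -> : v + 1 + 1 = v + 2%:R by ring.
  by rewrite /f iter_b2 eq_sym.
have := const_step (g := fun v => f (v+1) == f v) hg.
case h0: (f (0+1) == f 0) => H.
  have := constant_S (const_step (g := f) (fun v => eqP (H v))).
  by case/orP => ->; rewrite ?orbT.
by rewrite alt_of ?orbT // => v; rewrite H.
Qed.

End Cyc.

Section Prob.
Variable m : nat.
Local Notation N := m.+3.
Variable S : {set coloring N}.
Local Notation hit := (rmm_hit S).
Local Notation r := ((1/2 : rat) ^+ N).
Implicit Types (c : coloring N) (v : 'I_N).

Lemma node_ge0 c v x : 0 <= rmm_node_prob c v x.
Proof.
rewrite /rmm_node_prob; case: ifP => _; first by rewrite ler0n.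
case: ifP => _; first by rewrite ler0n.
lra.
Qed.

Lemma node_sum c v : rmm_node_prob c v true + rmm_node_prob c v false = 1.
Proof.
rewrite /rmm_node_prob; case: ifP => _ /=; first by rewrite addr0.
case: ifP => _ /=; first by rewrite add0r.
lra.
Qed.

Lemma trans_ge0 c c' : 0 <= rmm_trans c c'.
Proof. by apply: prodr_ge0 => v _; apply: node_ge0. Qed.

Lemma trans_sum c : \sum_(c' : coloring N) rmm_trans c c' = 1.
Proof.
rewrite /rmm_trans -bigA_distr_bigA /=.
by rewrite big1 // => v _; rewrite big_bool /= node_sum.
Qed.

Lemma hit_in t c : c \in S -> hit t c = 1.
Proof. by case: t => [|t] /= ->. Qed.

Lemma hit_ge0 t c : 0 <= hit t c.
Proof.
elim: t c => [|t IH] c /=; first by rewrite ler0n.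
case: (c \in S) => //; apply: sumr_ge0 => c' _.
by apply: mulr_ge0; [apply: trans_ge0 | apply: IH].
Qed.

Lemma hit_le1 t c : hit t c <= 1.
Proof.
elim: t c => [|t IH] c /=; first by case: (c \in S).
case: (c \in S) => //; rewrite -[X in _ <= X](trans_sum c).
by apply: ler_sum => c' _; apply: ler_piMr; [apply: trans_ge0 | apply: IH].
Qed.

Lemma hit_mono t c : hit t c <= hit t.+1 c.
Proof.
elim: t c => [|t IH] c /=.
  case: (c \in S) => //=; apply: sumr_ge0 => c' _.
  by apply: mulr_ge0; [apply: trans_ge0 | exact: (hit_ge0 0)].
case: (c \in S) => //; apply: ler_sum => c' _.
by apply: ler_wpM2l; [apply: trans_ge0 | apply: IH].
Qed.

Lemma hit_monoD t s c : hit t c <= hit (s + t) c.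
Proof.
elim: s => [|s IH] //; apply: (le_trans IH); exact: hit_mono.
Qed.

Lemma r_gt0 : 0 < r.
Proof. by apply: exprn_gt0; lra. Qed.
Lemma r_le1 : r <= 1.
Proof. by apply: exprn_ile1; lra. Qed.

Lemma trans_b c : r <= rmm_trans c ((@bstep m) c).
Proof.
have -> : r = \prod_(v : 'I_N) (1/2 : rat) by rewrite prodr_const card_ord.
apply: ler_prod => v _; apply/andP; split; first by lra.
rewrite /rmm_node_prob nblueE nwhiteE ffunE.
by case: (c (v+1)); case: (c (v-1)) => /=; rewrite ?lexx //; lra.
Qed.

Lemma arith (M Tb R P : rat) : 0 <= Tb -> R <= Tb -> 0 <= M * P ->
  Tb * (M * (1 - P)) + (1 - Tb) * M <= M * (1 - R * P).
Proof.
move=> T0 RT MP.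
have -> : Tb * (M * (1 - P)) + (1 - Tb) * M = M - Tb * (M * P) by ring.
have -> : M * (1 - R * P) = M - R * (M * P) by ring.
by rewrite lerD2l lerN2; apply: ler_wpM2r.
Qed.

Lemma key j t M : 0 <= M -> (forall c, 1 - hit t c <= M) ->
  forall c, iter j (@bstep m) c \in S -> 1 - hit (j + t) c <= M * (1 - r ^+ j).
Proof.
move=> hM hb; elim: j => [|j IH] c hc.
  by rewrite add0n hit_in // subrr mulr0.
case cS: (c \in S).
  rewrite hit_in // subrr; apply: mulr_ge0 => //; rewrite subr_ge0.
  by apply: exprn_ile1; [apply: ltW; apply: r_gt0 | apply: r_le1].
rewrite addSn /= cS.
set b := (@bstep m) c.
have e : 1 - \sum_(c' : coloring N) rmm_trans c c' * hit (j + t) c' =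
         \sum_(c' : coloring N) rmm_trans c c' * (1 - hit (j + t) c').
  rewrite -{1}(trans_sum c) -sumrB; apply: eq_bigr => c' _.
  by rewrite mulrBr mulr1.
rewrite e (bigD1 b) //=.
have h1 : 1 - hit (j + t) b <= M * (1 - r ^+ j) by apply: IH; rewrite -iterSr.
have h2 : \sum_(c' | c' != b) rmm_trans c c' * (1 - hit (j + t) c') <=
          \sum_(c' | c' != b) rmm_trans c c' * M.
  apply: ler_sum => c' _; apply: ler_wpM2l; first by apply: trans_ge0.
  apply: le_trans (hb c'); rewrite lerD2l lerN2; exact: hit_monoD.
have h3 : \sum_(c' | c' != b) rmm_trans c c' * M = (1 - rmm_trans c b) * M.
  rewrite -big_distrl /=; congr (_ * _).
  by have := trans_sum c; rewrite (bigD1 b) //= => <-; rewrite addrC addrK.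
have h4 := trans_b c.
have hMr : 0 <= M * r ^+ j by apply: mulr_ge0 => //; apply: exprn_ge0; apply: ltW; apply: r_gt0.
apply: le_trans (lerD (ler_wpM2l (trans_ge0 c b) h1) h2) _.
rewrite h3 (exprS r j); exact: (arith (trans_ge0 c b) h4 hMr).
Qed.

Lemma amp (hS : forall c, iter N (@bstep m) c \in S) k c :
  1 - hit (k * N) c <= (1 - r ^+ N) ^+ k.
Proof.
elim: k c => [|k IH] c.
  by rewrite mul0n expr0; have := hit_ge0 0 c; lra.
have hq : 0 <= (1 - r ^+ N) ^+ k.
  apply: exprn_ge0; rewrite subr_ge0; apply: exprn_ile1; last exact: r_le1.
  by apply: ltW; apply: r_gt0.
rewrite mulSn exprSr; exact: (key hq IH (hS c)).
Qed.

Lemma bern (q : rat) k : 0 <= q <= 1 -> (1 - q) ^+ k * (1 + k%:R * q) <= 1.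
Proof.
move=> /andP[q0 q1]; elim: k => [|k IH]; first by rewrite expr0 mul0r addr0 mulr1.
rewrite exprSr -natr1.
have P0 : 0 <= (1 - q) ^+ k by apply: exprn_ge0; lra.
move: IH P0; set P := (1 - q) ^+ k; set K := k%:R => IH P0.
have K0 : 0 <= K by rewrite ler0n.
have : 0 <= P * (q * q * (K + 1)) by apply: mulr_ge0 => //; apply: mulr_ge0; [apply: mulr_ge0|lra].
have -> : P * (1 - q) * (1 + (K + 1) * q) = P * (1 + K * q) - P * (q * q * (K + 1)) by ring.
lra.
Qed.

Lemma fin_arith (eps q P K H1 H2 : rat) : 0 < eps -> 0 < q -> 0 <= K -> 0 <= P ->
  P * (1 + K * q) <= 1 -> 1 < K * (eps * q) -> 1 - H1 <= P -> H1 <= H2 -> 1 - eps < H2.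
Proof.
move=> e0 q0 K0 P0 hb hk h1 h2.
have hKq : 0 < 1 + K * q by have := mulr_ge0 K0 (ltW q0); lra.
have : P * (1 + K * q) < eps * (1 + K * q).
  have -> : eps * (1 + K * q) = eps + K * (eps * q) by ring.
  lra.
rewrite ltr_pM2r // => hP.
lra.
Qed.

Lemma reach (hS : forall c, iter N (@bstep m) c \in S) c : rmm_as_reaches S c.
Proof.
move=> eps he.
set q := r ^+ N.
have q0 : 0 < q by apply: exprn_gt0; apply: r_gt0.
have q1 : q <= 1 by apply: exprn_ile1; [apply: ltW; apply: r_gt0 | apply: r_le1].
have eq0 : 0 < eps * q by apply: mulr_gt0.
have := archi_boundP (ltW (divr_gt0 ltr01 eq0)).
set k := Num.Def.archi_bound _ => hk.
rewrite (ltr_pdivrMr _ _ eq0) in hk.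
exists (k * N)%N => t ht.
have h1 := amp hS k c.
have h2 := hit_monoD (k * N) (t - k * N) c; rewrite (subnK ht) in h2.
have hb := @bern q k (introT andP (conj (ltW q0) q1)).
have P0 : 0 <= (1 - q) ^+ k by apply: exprn_ge0; rewrite subr_ge0.
have K0 : 0 <= (k%:R : rat) by rewrite ler0n.
exact: (fin_arith he q0 K0 P0 hb hk h1 h2).
Qed.

End Prob.

Unset Implicit Arguments.

Theorem theorem2p7 (n : nat) (hn : (3 <= n)%N) (c0 : coloring n) :
  (odd n -> exists t : nat, mm_stable (iter t (@mm_step n) c0)) /\
  (~~ odd n -> exists t : nat,
      mm_stable (iter t (@mm_step n) c0) \/ alternating (iter t (@mm_step n) c0)) /\
  (odd n -> rmm_as_reaches [set c | all_white c || all_blue c] c0) /\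
  (~~ odd n ->
     rmm_as_reaches [set c | [|| all_white c, all_blue c | alternating c]] c0).
Proof.
case: n hn c0 => [|[|[|m]]] // hn c0.
have Hmm := @mm_main m _ c0 (leqnn _).
split; [|split; [|split]].
- move=> ho; have [t [h|h]] := Hmm; first by exists t; apply: mm_stableP.
  by case: (allbad_odd ho h).
- move=> _; have [t [h|h]] := Hmm; exists t.
    by left; apply: mm_stableP.
  by right; apply: alt_of; apply: h1_of.
- move=> ho; apply: reach => c; rewrite inE; exact: bN_odd.
- move=> _; apply: reach => c; rewrite inE; exact: bN_even.
Qed.
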